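(* Let $A$ be a ring with local units. Then $A$ is a left SF-ring if and only if for every maximal left ideal $I$ of $A$ and every $a\in I$ there exists $b\in I$ such that $ab=a$.
   Context: A ring with local units is an associative ring $A$ such that for any finitely many $a_1,\dots,a_n\in A$ there is an idempotent $e\in A$ with $\{a_1,\dots,a_n\}\subseteq eAe$. $A\text{-}\mathrm{MOD}$ denotes the category of unital left $A$-modules (those $N$ with $AN=N$), and $\mathrm{MOD}\text{-}A$ the category of unital right $A$-modules. A module $N\in A\text{-}\mathrm{MOD}$ is flat if $-\otimes_A N:\mathrm{MOD}\text{-}A\to\mathbf{Ab}$ is exact. $A$ is a left SF-ring (left simple flat ring) if every simple left $A$-module in $A\text{-}\mathrm{MOD}$ is flat in $A\text{-}\mathrm{MOD}$. *)

(* Defs.v *)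
From HB Require Import structures.
From mathcomp Require Import all_boot all_order all_algebra.
Set Implicit Arguments. Unset Strict Implicit. Unset Printing Implicit Defensive.
Import GRing.Theory.
Local Open Scope ring_scope.

Record rng := Rng {
  rcar :> zmodType;
  rmul : rcar -> rcar -> rcar;
  rmulA : forall a b c, rmul a (rmul b c) = rmul (rmul a b) c;
  rmulDl : forall a b c, rmul (a + b) c = rmul a c + rmul b c;
  rmulDr : forall a b c, rmul a (b + c) = rmul a b + rmul a c }.

Definition has_local_units (A : rng) : Prop :=
  forall s : seq A, exists e : A, rmul e e = e /\
    forall a, a \in s -> exists y : A, a = rmul (rmul e y) e.

Record lmod (A : rng) := LMod {
  lcar :> zmodType;
  lact : A -> lcar -> lcar;
  lactDl : forall a b m, lact (a + b) m = lact a m + lact b m;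
  lactDr : forall a m n, lact a (m + n) = lact a m + lact a n;
  lactA : forall a b m, lact (rmul a b) m = lact a (lact b m) }.

Record rmod (A : rng) := RMod {
  rmcar :> zmodType;
  ract : rmcar -> A -> rmcar;
  ractDl : forall m n a, ract (m + n) a = ract m a + ract n a;
  ractDr : forall m a b, ract m (a + b) = ract m a + ract m b;
  ractA : forall m a b, ract m (rmul a b) = ract (ract m a) b }.

(* Unital modules: A N = N (every element is a finite sum of a_i n_i). *)
Definition lunital (A : rng) (N : lmod A) : Prop :=
  forall n : N, exists s : seq (A * N), n = \sum_(p <- s) lact p.1 p.2.

Definition runital (A : rng) (X : rmod A) : Prop :=
  forall x : X, exists s : seq (X * A), x = \sum_(p <- s) ract p.1 p.2.

Definition additive_map (G H : zmodType) (f : G -> H) : Prop :=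
  forall x y, f (x + y) = f x + f y.

Definition rmod_hom (A : rng) (X Y : rmod A) (f : X -> Y) : Prop :=
  additive_map f /\ forall x a, f (ract x a) = ract (f x) a.

Definition lsubmod (A : rng) (N : lmod A) (P : N -> Prop) : Prop :=
  P 0 /\ (forall x y, P x -> P y -> P (x - y)) /\
  (forall a x, P x -> P (lact a x)).

Definition lsimple (A : rng) (N : lmod A) : Prop :=
  (exists n : N, n != 0) /\
  forall P : N -> Prop, lsubmod P -> (forall n, P n -> n = 0) \/ (forall n, P n).

Definition balanced (A : rng) (X : rmod A) (N : lmod A) (G : zmodType)
    (h : X -> N -> G) : Prop :=
  (forall x x' n, h (x + x') n = h x n + h x' n) /\
  (forall x n n', h x (n + n') = h x n + h x n') /\
  (forall x a n, h (ract x a) n = h x (lact a n)).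

(* (T, b) is a tensor product X (x)_A N, by its universal property. *)
Definition is_tensor (A : rng) (X : rmod A) (N : lmod A) (T : zmodType)
    (b : X -> N -> T) : Prop :=
  balanced b /\
  forall (G : zmodType) (h : X -> N -> G), balanced h ->
    (exists phi : T -> G, additive_map phi /\ forall x n, phi (b x n) = h x n) /\
    (forall phi psi : T -> G, additive_map phi -> additive_map psi ->
       (forall x n, phi (b x n) = h x n) -> (forall x n, psi (b x n) = h x n) ->
       forall t, phi t = psi t).

Definition exact_at (G H K : zmodType) (f : G -> H) (g : H -> K) : Prop :=
  forall y, g y = 0 <-> exists x, f x = y.

(* N is flat: - (x)_A N : MOD-A -> Ab is exact, i.e. it sends every exact
   sequence X -> Y -> Z of unital right modules to an exact sequence
   X(x)N -> Y(x)N -> Z(x)N, where the induced maps are f (x) N, g (x) N. *)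
Definition flat (A : rng) (N : lmod A) : Prop :=
  forall (X Y Z : rmod A) (f : X -> Y) (g : Y -> Z),
    runital X -> runital Y -> runital Z ->
    rmod_hom f -> rmod_hom g -> exact_at f g ->
  forall (TX TY TZ : zmodType) (bX : X -> N -> TX) (bY : Y -> N -> TY)
         (bZ : Z -> N -> TZ),
    is_tensor bX -> is_tensor bY -> is_tensor bZ ->
  forall (F : TX -> TY) (G : TY -> TZ),
    additive_map F -> additive_map G ->
    (forall x n, F (bX x n) = bY (f x) n) ->
    (forall y n, G (bY y n) = bZ (g y) n) ->
    exact_at F G.

Definition left_SF (A : rng) : Prop :=
  forall N : lmod A, lunital N -> lsimple N -> flat N.

Definition left_ideal (A : rng) (I : A -> Prop) : Prop :=
  I 0 /\ (forall x y, I x -> I y -> I (x - y)) /\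
  (forall a x, I x -> I (rmul a x)).

Definition maximal_left_ideal (A : rng) (I : A -> Prop) : Prop :=
  left_ideal I /\ (exists a, ~ I a) /\
  forall J : A -> Prop, left_ideal J -> (forall x, I x -> J x) ->
    (forall x, J x <-> I x) \/ (forall x, J x).

(* Main.v *)
Require Import Defs.
From HB Require Import structures.
From mathcomp Require Import all_boot all_order all_algebra.
From Stdlib Require Import Classical ClassicalEpsilon PropExtensionality FunctionalExtensionality.
Set Implicit Arguments. Unset Strict Implicit. Unset Printing Implicit Defensive.
Import GRing.Theory.
Local Open Scope ring_scope.

Record subgrp (Z : zmodType) := SubGrp {
  spred :> Z -> Prop;
  sg0 : spred 0;
  sgB : forall x y, spred x -> spred y -> spred (x - y) }.

Lemma sgN (Z : zmodType) (W : subgrp Z) x : W x -> W (- x).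
Proof. by move=> h; rewrite -sub0r; apply: sgB => //; apply: sg0. Qed.
Lemma sgD (Z : zmodType) (W : subgrp Z) x y : W x -> W y -> W (x + y).
Proof. by move=> hx hy; rewrite -[y]opprK; apply: sgB => //; apply: sgN. Qed.

Definition crep (Z : zmodType) (W : subgrp Z) (y : Z) : Z :=
  epsilon (inhabits 0) (fun z => W (z - y)).

Lemma crepP (Z : zmodType) (W : subgrp Z) y : W (crep W y - y).
Proof. apply: (epsilon_spec (inhabits 0) (fun z => W (z - y))).
  by exists y; rewrite subrr; apply: sg0. Qed.

Lemma crep_eq (Z : zmodType) (W : subgrp Z) y y' : W (y - y') -> crep W y = crep W y'.
Proof.
move=> h; rewrite /crep.
suff -> : (fun z => W (z - y)) = (fun z => W (z - y')) by [].
apply: functional_extensionality => z; apply: propositional_extensionality.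
split=> hz.
- have -> : z - y' = (z - y) + (y - y') by rewrite addrA subrK.
  by apply: sgD.
- have -> : z - y = (z - y') - (y - y') by rewrite opprB addrA subrK.
  by apply: sgB.
Qed.

Lemma crepK (Z : zmodType) (W : subgrp Z) y : crep W (crep W y) = crep W y.
Proof. exact/crep_eq/crepP. Qed.

Definition qT (Z : zmodType) (W : subgrp Z) := {y : Z | crep W y == y}.
HB.instance Definition _ (Z : zmodType) (W : subgrp Z) := Choice.on (qT W).

Definition qpi (Z : zmodType) (W : subgrp Z) (y : Z) : qT W :=
  exist _ (crep W y) (introT eqP (crepK W y)).

Lemma qpi_eq (Z : zmodType) (W : subgrp Z) x y : qpi W x = qpi W y <-> W (x - y).
Proof.
split.
- move=> /(congr1 val) /= h.
  have -> : x - y = (crep W y - y) - (crep W x - x).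
    by rewrite h opprB addrCA addrAC subrr add0r.
  by apply: sgB; apply: crepP.
- by move=> h; apply: val_inj => /=; apply: crep_eq.
Qed.

Lemma qpi_val (Z : zmodType) (W : subgrp Z) (q : qT W) : qpi W (val q) = q.
Proof. by apply: val_inj => /=; apply/eqP; case: q. Qed.

Lemma val_qpi (Z : zmodType) (W : subgrp Z) y : W (val (qpi W y) - y).
Proof. exact: crepP. Qed.

Definition qadd (Z : zmodType) (W : subgrp Z) (p q : qT W) := qpi W (val p + val q).
Definition qopp (Z : zmodType) (W : subgrp Z) (p : qT W) := qpi W (- val p).
Definition qzero (Z : zmodType) (W : subgrp Z) := qpi W 0.

Lemma qpi_addE (Z : zmodType) (W : subgrp Z) x y :
  qadd (qpi W x) (qpi W y) = qpi W (x + y).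
Proof.
apply/qpi_eq.
have -> : val (qpi W x) + val (qpi W y) - (x + y)
   = (val (qpi W x) - x) + (val (qpi W y) - y).
  by rewrite opprD addrACA.
by apply: sgD; apply: val_qpi.
Qed.

Lemma qpi_oppE (Z : zmodType) (W : subgrp Z) x : qopp (qpi W x) = qpi W (- x).
Proof.
apply/qpi_eq. rewrite -opprD; apply: sgN; apply: val_qpi.
Qed.

Lemma qT_ind (Z : zmodType) (W : subgrp Z) (P : qT W -> Prop) :
  (forall x, P (qpi W x)) -> forall q, P q.
Proof. by move=> h q; rewrite -(qpi_val q). Qed.

Lemma qaddA (Z : zmodType) (W : subgrp Z) : associative (@qadd Z W).
Proof.
elim/qT_ind=> x; elim/qT_ind=> y; elim/qT_ind=> z.
by rewrite !qpi_addE addrA.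
Qed.
Lemma qaddC (Z : zmodType) (W : subgrp Z) : commutative (@qadd Z W).
Proof. elim/qT_ind=> x; elim/qT_ind=> y. by rewrite !qpi_addE addrC. Qed.
Lemma qadd0 (Z : zmodType) (W : subgrp Z) : left_id (qzero W) (@qadd Z W).
Proof. elim/qT_ind=> x. by rewrite /qzero qpi_addE add0r. Qed.
Lemma qaddN (Z : zmodType) (W : subgrp Z) : left_inverse (qzero W) (@qopp Z W) (@qadd Z W).
Proof. elim/qT_ind=> x. by rewrite qpi_oppE qpi_addE addNr. Qed.

HB.instance Definition _ (Z : zmodType) (W : subgrp Z) :=
  GRing.isZmodule.Build (qT W) (@qaddA Z W) (@qaddC Z W) (@qadd0 Z W) (@qaddN Z W).

Lemma qpiD (Z : zmodType) (W : subgrp Z) x y : qpi W (x + y) = qpi W x + qpi W y.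
Proof. by rewrite -qpi_addE. Qed.
Lemma qpi0 (Z : zmodType) (W : subgrp Z) : qpi W 0 = 0.
Proof. by []. Qed.
Lemma qpi_eq0 (Z : zmodType) (W : subgrp Z) x : qpi W x = 0 <-> W x.
Proof. rewrite -qpi0 qpi_eq subr0. by []. Qed.

Lemma addm0 (G H : zmodType) (f : G -> H) : additive_map f -> f 0 = 0.
Proof. by move=> h; apply: (addrI (f 0)); rewrite -h !addr0. Qed.
Lemma addmN (G H : zmodType) (f : G -> H) x : additive_map f -> f (- x) = - f x.
Proof. by move=> h; apply: (addrI (f x)); rewrite -h !subrr addm0. Qed.
Lemma addmB (G H : zmodType) (f : G -> H) x y : additive_map f -> f (x - y) = f x - f y.
Proof. by move=> h; rewrite h addmN. Qed.
Lemma addm_sum (G H : zmodType) (f : G -> H) (I : Type) (s : seq I) (F : I -> G) :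
  additive_map f -> f (\sum_(p <- s) F p) = \sum_(p <- s) f (F p).
Proof.
move=> h; elim: s => [|x s IH]; first by rewrite !big_nil addm0.
by rewrite !big_cons h IH.
Qed.

Lemma rmul_addl (A : rng) (c : A) : additive_map (fun x : A => rmul x c).
Proof. by move=> x y; rewrite rmulDl. Qed.
Lemma rmul_addr (A : rng) (c : A) : additive_map (rmul c).
Proof. by move=> x y; rewrite rmulDr. Qed.
Lemma lact_addl (A : rng) (N : lmod A) (m : N) : additive_map (fun a => lact a m).
Proof. by move=> x y; rewrite lactDl. Qed.
Lemma lact_addr (A : rng) (N : lmod A) (a : A) : additive_map (@lact A N a).
Proof. by move=> x y; rewrite lactDr. Qed.
Lemma ract_addl (A : rng) (X : rmod A) (a : A) : additive_map (fun x : X => ract x a).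
Proof. by move=> x y; rewrite ractDl. Qed.
Lemma ract_addr (A : rng) (X : rmod A) (x : X) : additive_map (ract x).
Proof. by move=> a b; rewrite ractDr. Qed.
Lemma bal_addl (A : rng) (X : rmod A) (N : lmod A) (G : zmodType) (h : X -> N -> G) n :
  balanced h -> additive_map (fun x => h x n).
Proof. by case=> h1 _ x y; rewrite h1. Qed.
Lemma bal_addr (A : rng) (X : rmod A) (N : lmod A) (G : zmodType) (h : X -> N -> G) x :
  balanced h -> additive_map (h x).
Proof. by case=> _ [h2 _] n m; rewrite h2. Qed.

Definition XI (A : rng) (X : rmod A) (P : A -> Prop) (w : X) : Prop :=
  exists s : seq (X * A), (forall p, p \in s -> P p.2) /\ w = \sum_(p <- s) ract p.1 p.2.

Lemma XI_single (A : rng) (X : rmod A) (P : A -> Prop) (x : X) (c : A) : P c -> XI P (ract x c).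
Proof.
move=> hc; exists [:: (x, c)]; split; last by rewrite big_seq1.
by move=> p; rewrite inE => /eqP ->.
Qed.

Lemma XI0 (A : rng) (X : rmod A) (P : A -> Prop) : XI P (0 : X).
Proof. by exists [::]; rewrite big_nil. Qed.

Lemma XIB (A : rng) (X : rmod A) (P : A -> Prop) (x y : X) :
  XI P x -> XI P y -> XI P (x - y).
Proof.
move=> [s [hs ->]] [t [ht ->]].
exists (s ++ map (fun p => (- p.1, p.2)) t); split.
- move=> p; rewrite mem_cat => /orP [/hs //|/mapP [q /ht hq ->]] //.
- rewrite big_cat big_map /= -sumrN; congr (_ + _).
  by apply: eq_bigr => p _; rewrite (addmN _ (@ract_addl _ X p.2)).
Qed.

Definition XIg (A : rng) (X : rmod A) (P : A -> Prop) : subgrp X :=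
  SubGrp (@XI0 A X P) (@XIB A X P).

Lemma left_ideal_sum (A : rng) (I : A -> Prop) (T : eqType) (s : seq T) (F : T -> A) :
  left_ideal I -> (forall p, p \in s -> I (F p)) -> I (\sum_(p <- s) F p).
Proof.
move=> [h0 [hB _]]; elim: s => [|x s IH] hs; first by rewrite big_nil.
rewrite big_cons -[\sum_(_ <- _) _]opprK; apply: (hB).
  by apply: hs; rewrite inE eqxx.
rewrite -sub0r; apply: (hB) => //; apply: IH => p hp; apply: hs.
by rewrite inE hp orbT.
Qed.

Definition ideal_grp (A : rng) (I : A -> Prop) (h : left_ideal I) : subgrp A :=
  SubGrp (proj1 h) (proj1 (proj2 h)).

Lemma lsub_ann (A : rng) (N : lmod A) : lsubmod (fun m : N => forall a, lact a m = 0).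
Proof.
split; first by move=> a; exact: (addm0 (@lact_addr _ N a)).
split.
- by move=> x y hx hy a; rewrite (addmB _ _ (@lact_addr _ N a)) hx hy subrr.
- by move=> b x hx a; rewrite -lactA hx.
Qed.

Lemma cyclic_gen (A : rng) (N : lmod A) : lunital N -> lsimple N ->
  exists n : N, (forall m, exists a, m = lact a n) /\
     maximal_left_ideal (fun a => lact a n = 0).
Proof.
move=> hu [[n hn] hs].
have hann : forall m : N, (forall a, lact a m = 0) -> m = 0.
  case: (hs _ (lsub_ann N)) => [h|hall]; first exact h.
  exfalso; move/eqP: hn; apply; case: (hu n) => s ->.
  by rewrite big1 // => p _; apply: hall.
have [a ha] : exists a, lact a n <> 0.
  apply: NNPP => hne; move/eqP: hn; apply; apply: hann => a.
  by apply: NNPP => h; apply: hne; exists a.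
have hsubP : lsubmod (fun m : N => exists c, m = lact c n).
  split; first by exists 0; rewrite (addm0 (lact_addl n)).
  split.
  - by move=> x y [c ->] [d ->]; exists (c - d); rewrite (addmB _ _ (lact_addl n)).
  - by move=> b x [c ->]; exists (rmul b c); rewrite lactA.
have hall : forall m : N, exists c, m = lact c n.
  case: (hs _ hsubP) => [h|//]; exfalso; apply: ha; apply: h; by exists a.
exists n; split => //.
have hli : left_ideal (fun a => lact a n = 0).
  split; first exact: (addm0 (lact_addl n)).
  split.
  - by move=> x y hx hy; rewrite (addmB _ _ (lact_addl n)) hx hy subrr.
  - by move=> b x hx; rewrite lactA hx (addm0 (@lact_addr _ N b)).
split => //; split; first by exists a.
move=> J [J0 [JB JM]] hIJ.
have hsubJ : lsubmod (fun m : N => exists j, J j /\ m = lact j n).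
  split; first by exists 0; split => //; rewrite (addm0 (lact_addl n)).
  split.
  - move=> x y [c [hc ->]] [d [hd ->]]; exists (c - d); split; first exact: JB.
    by rewrite (addmB _ _ (lact_addl n)).
  - by move=> b x [c [hc ->]]; exists (rmul b c); split; [apply: JM | rewrite lactA].
case: (hs _ hsubJ) => [h0|hallJ]; [left|right].
- move=> x; split; last exact: hIJ.
  by move=> hx; apply: h0; exists x.
- move=> x; case: (hallJ (lact x n)) => j [hj hxj].
  have hIx : lact (x - j) n = 0 by rewrite (addmB _ _ (lact_addl n)) hxj subrr.
  have := JB _ _ (hIJ _ hIx) (JB _ _ J0 hj).
  by rewrite sub0r opprK subrK.
Qed.

Lemma bal0 (A : rng) (X : rmod A) (N : lmod A) (G : zmodType) :
  balanced (fun (_ : X) (_ : N) => (0 : G)).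
Proof. by split; [|split] => *; rewrite ?addr0. Qed.

Lemma fin_units (A : rng) (I : A -> Prop) : left_ideal I ->
  (forall a, I a -> exists b, I b /\ rmul a b = a) ->
  forall s : seq A, (forall x, x \in s -> I x) ->
    exists b, I b /\ forall x, x \in s -> rmul x b = x.
Proof.
move=> [I0 [IB IM]] hc; elim => [|a s IH] hs.
  by exists 0; split.
have [b [hb hbs]] : exists b, I b /\ forall x, x \in s -> rmul x b = x.
  by apply: IH => x hx; apply: hs; rewrite inE hx orbT.
have ha : I a by apply: hs; rewrite inE eqxx.
have ha' : I (a - rmul a b) by apply: IB => //; apply: IM.
have [c [hcI hcc]] := hc _ ha'.
have IN : forall x, I x -> I (- x) by move=> x hx; rewrite -sub0r; apply: IB.
have ID : forall x y, I x -> I y -> I (x + y).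
  by move=> x y hx hy; rewrite -[y]opprK; apply: IB => //; apply: IN.
exists (b + c - rmul b c); split.
  by apply: IB; [apply: ID | apply: IM].
move=> x; rewrite inE => /orP [/eqP ->|hx].
- rewrite (addmB _ _ (rmul_addr a)) rmulDr rmulA.
  move: hcc; rewrite (addmB _ _ (rmul_addl c)) => hcc.
  have -> : rmul a c = (a - rmul a b) + rmul (rmul a b) c.
    by rewrite -hcc; apply/esym; apply: subrK.
  by rewrite addrA addrK addrC subrK.
- rewrite (addmB _ _ (rmul_addr x)) rmulDr rmulA hbs //.
  by rewrite addrK.
Qed.

Lemma sf_of_cond (A : rng) :
  (forall I : A -> Prop, maximal_left_ideal I ->
     forall a : A, I a -> exists b : A, I b /\ rmul a b = a) -> left_SF A.
Proof.
move=> hc N hu hsimp.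
case: (cyclic_gen hu hsimp) => n [hgen hmax].
have hI : left_ideal (fun a => lact a n = 0) := hmax.1.
have hfin := fin_units hI (hc _ hmax).
move=> X Y Z f g huX huY huZ [fadd fhom] [gadd ghom] hex TX TY TZ bX bY bZ
  tX tY tZ F G Fadd Gadd hFc hGc t.
split; last first.
  move=> [s <-].
  have := (tX.2 TZ _ (bal0 X N TZ)).2 (fun t => G (F t)) (fun _ => 0).
  apply => //.
  - by move=> u v; rewrite Fadd Gadd.
  - by move=> u v; rewrite addr0.
  - move=> x m; rewrite hFc hGc.
    have -> : g (f x) = 0 by apply/hex; exists x.
    exact: (addm0 (bal_addl m tZ.1)).
move=> hGt.
have S0 : (exists y : Y, (0 : TY) = bY y n).
  by exists 0; rewrite (addm0 (bal_addl n tY.1)).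
have SB : forall u v : TY, (exists y, u = bY y n) -> (exists y, v = bY y n) ->
    exists y, u - v = bY y n.
  by move=> u v [y ->] [y' ->]; exists (y - y'); rewrite (addmB _ _ (bal_addl n tY.1)).
pose S := SubGrp S0 SB.
have [y ty] : exists y, t = bY y n.
  have := (tY.2 (qT S) _ (bal0 Y N (qT S))).2 (qpi S) (fun _ => 0).
  move=> /(_ (fun u v => qpiD S u v)) /(_ (fun u v => esym (addr0 0))).
  have hc1 : forall y m, qpi S (bY y m) = 0.
    move=> y' m; apply/qpi_eq0; case: (hgen m) => c ->.
    by exists (ract y' c); rewrite (tY.1).2.2.
  move=> /(_ hc1 (fun _ _ => erefl)) /(_ t) /qpi_eq0.
  by [].
pose ZI := XIg Z (fun a => lact a n = 0).
pose al (m : N) := epsilon (inhabits 0) (fun a => m = lact a n).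
have alP : forall m, m = lact (al m) n.
  by move=> m; apply: (epsilon_spec (inhabits 0) (fun a => m = lact a n)); apply: hgen.
have ZIr : forall (z : Z) c c', lact c n = lact c' n ->
    qpi ZI (ract z c) = qpi ZI (ract z c').
  move=> z c c' hcc; apply/qpi_eq; rewrite -(addmB _ _ (ract_addr z)).
  by apply: XI_single; rewrite (addmB _ _ (lact_addl n)) hcc subrr.
pose h (z : Z) (m : N) := qpi ZI (ract z (al m)).
have hbal : balanced h.
  split; [|split].
  - by move=> x x' m; rewrite /h ractDl qpiD.
  - move=> x m m'; rewrite /h -qpiD -ractDr; apply: ZIr.
    by rewrite lactDl -!alP.
  - move=> x c m; rewrite /h -ractA; apply: ZIr.
    by rewrite lactA -!alP.
have [phi [phiadd phic]] := (tZ.2 _ h hbal).1.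
have hZ1 : ZI (ract (g y) (al n)).
  apply/qpi_eq0; rewrite -/(h (g y) n) -phic -hGc -ty hGt.
  exact: (addm0 phiadd).
have hZ : ZI (g y).
  case: (huZ (g y)) => s hs.
  have -> : g y = (g y - ract (g y) (al n)) + ract (g y) (al n) by rewrite subrK.
  apply: sgD => //.
  exists (map (fun p => (p.1, p.2 - rmul p.2 (al n))) s); split.
  - move=> p /mapP [q _ ->] /=.
    by rewrite (addmB _ _ (lact_addl n)) lactA -alP subrr.
  - rewrite big_map hs (addm_sum _ _ (ract_addl (al n))) -sumrB.
    by apply: eq_bigr => p _; rewrite /= -ractA (addmB _ _ (ract_addr p.1)).
case: hZ => s [hsI hgy].
have [b [hb hbs]] : exists b, lact b n = 0 /\ forall x, x \in map snd s -> rmul x b = x.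
  by apply: hfin => x /mapP [p hp ->]; apply: hsI.
have hgyb : ract (g y) b = g y.
  rewrite {1}hgy (addm_sum _ _ (ract_addl b)) hgy.
  apply: eq_big_seq => p hp; rewrite -ractA hbs //.
  by apply/mapP; exists p.
have [x hx] : exists x, f x = y - ract y b.
  by apply/hex; rewrite (addmB _ _ gadd) ghom hgyb subrr.
exists (bX x n); rewrite hFc hx (addmB _ _ (bal_addl n tY.1)) (tY.1).2.2 hb.
by rewrite (addm0 (bal_addr y tY.1)) subr0.
Qed.

Lemma qpi_add (Z : zmodType) (W : subgrp Z) : additive_map (qpi W).
Proof. by move=> x y; rewrite qpiD. Qed.

Lemma lu_seq (A : rng) : has_local_units A -> forall s : seq A,
  exists u, forall c, c \in s -> rmul c u = c /\ rmul u c = c.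
Proof.
move=> hA s; case: (hA s) => e [he hs]; exists e => c /hs [z ->]; split.
- by rewrite -rmulA he.
- by rewrite !rmulA he.
Qed.

Lemma runit (A : rng) (hA : has_local_units A) (Y : rmod A) (hY : runital Y) :
  forall (ys : seq Y) (cs : seq A), exists u,
    (forall y, y \in ys -> ract y u = y) /\
    (forall c, c \in cs -> rmul c u = c /\ rmul u c = c).
Proof.
elim => [|y ys IH] cs.
  by case: (lu_seq hA cs) => u hu; exists u; split.
case: (hY y) => s hs.
case: (IH (map snd s ++ cs)) => u [hu1 hu2].
exists u; split; last by move=> c hc; apply: hu2; rewrite mem_cat hc orbT.
move=> z; rewrite inE => /orP [/eqP ->|hz]; last exact: hu1.
rewrite {1}hs (addm_sum _ _ (ract_addl u)) hs.
apply: eq_big_seq => p hp; rewrite -ractA.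
have hp2 : p.2 \in [seq i.2 | i <- s] ++ cs.
  by rewrite mem_cat; apply/orP; left; apply/mapP; exists p.
by rewrite (proj1 (hu2 _ hp2)).
Qed.

Definition lactI (A : rng) (I : A -> Prop) (hI : left_ideal I) (c : A)
  (q : qT (ideal_grp hI)) : qT (ideal_grp hI) := qpi _ (rmul c (val q)).

Arguments lactI {A I} hI c q.

Lemma lactI_qpi (A : rng) (I : A -> Prop) (hI : left_ideal I) (c x : A) :
  lactI hI c (qpi _ x) = qpi _ (rmul c x).
Proof.
apply/qpi_eq; rewrite -(addmB _ _ (rmul_addr c)); apply: (proj2 (proj2 hI)).
exact: (val_qpi (ideal_grp hI) x).
Qed.

Lemma lactI_Dl (A : rng) (I : A -> Prop) (hI : left_ideal I) (a b : A) m :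
  lactI hI (a + b) m = lactI hI a m + lactI hI b m.
Proof. by elim/qT_ind: m => x; rewrite !lactI_qpi rmulDl qpiD. Qed.
Lemma lactI_Dr (A : rng) (I : A -> Prop) (hI : left_ideal I) (a : A) m n :
  lactI hI a (m + n) = lactI hI a m + lactI hI a n.
Proof.
elim/qT_ind: m => x; elim/qT_ind: n => y.
by rewrite -qpiD !lactI_qpi rmulDr qpiD.
Qed.
Lemma lactI_A (A : rng) (I : A -> Prop) (hI : left_ideal I) (a b : A) m :
  lactI hI (rmul a b) m = lactI hI a (lactI hI b m).
Proof. by elim/qT_ind: m => x; rewrite !lactI_qpi rmulA. Qed.

Definition AmodI (A : rng) (I : A -> Prop) (hI : left_ideal I) : lmod A :=
  LMod (@lactI_Dl A I hI) (@lactI_Dr A I hI) (@lactI_A A I hI).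

Definition ractJ (A : rng) (J : subgrp A) (hJ : forall x c, J x -> J (rmul x c))
  (q : qT J) (c : A) : qT J := qpi J (rmul (val q) c).

Lemma ractJ_qpi (A : rng) (J : subgrp A) (hJ : forall x c, J x -> J (rmul x c)) (x c : A) :
  ractJ hJ (qpi J x) c = qpi J (rmul x c).
Proof.
apply/qpi_eq; rewrite -(addmB _ _ (rmul_addl c)); apply: hJ.
exact: val_qpi.
Qed.

Lemma ractJ_Dl (A : rng) (J : subgrp A) (hJ : forall x c, J x -> J (rmul x c)) m n (a : A) :
  ractJ hJ (m + n) a = ractJ hJ m a + ractJ hJ n a.
Proof.
elim/qT_ind: m => x; elim/qT_ind: n => y.
by rewrite -qpiD !ractJ_qpi rmulDl qpiD.
Qed.
Lemma ractJ_Dr (A : rng) (J : subgrp A) (hJ : forall x c, J x -> J (rmul x c)) m (a b : A) :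
  ractJ hJ m (a + b) = ractJ hJ m a + ractJ hJ m b.
Proof. by elim/qT_ind: m => x; rewrite !ractJ_qpi rmulDr qpiD. Qed.
Lemma ractJ_A (A : rng) (J : subgrp A) (hJ : forall x c, J x -> J (rmul x c)) m (a b : A) :
  ractJ hJ m (rmul a b) = ractJ hJ (ractJ hJ m a) b.
Proof. by elim/qT_ind: m => x; rewrite !ractJ_qpi rmulA. Qed.

Definition AmodJ (A : rng) (J : subgrp A) (hJ : forall x c, J x -> J (rmul x c)) : rmod A :=
  RMod (@ractJ_Dl A J hJ) (@ractJ_Dr A J hJ) (@ractJ_A A J hJ).

Definition AA (A : rng) : rmod A :=
  @RMod A (rcar A) (@rmul A) (@rmulDl A) (@rmulDr A) (fun m a b => @rmulA A m a b).

Definition bb (A : rng) (I : A -> Prop) (hI : left_ideal I) (Y : rmod A)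
  (y : Y) (q : AmodI hI) : qT (XIg Y I) := qpi (XIg Y I) (ract y (val q)).

Arguments bb {A I} hI {Y} y q.

Lemma bb_qpi (A : rng) (I : A -> Prop) (hI : left_ideal I) (Y : rmod A) (y : Y) (x : A) :
  bb hI y (qpi (ideal_grp hI) x) = qpi (XIg Y I) (ract y x).
Proof.
apply/qpi_eq; rewrite -(addmB _ _ (ract_addr y)); apply: XI_single.
exact: (val_qpi (ideal_grp hI) x).
Qed.

Lemma tensor_model (A : rng) (hA : has_local_units A) (I : A -> Prop) (hI : left_ideal I)
  (Y : rmod A) (hY : runital Y) : is_tensor (bb hI (Y := Y)).
Proof.
pose Ig := ideal_grp hI.
pose W := XIg Y I.
have lactE : forall c x, lact (l := AmodI hI) c (qpi Ig x) = qpi Ig (rmul c x).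
  by move=> c x; apply: lactI_qpi.
split.
  split; [|split].
  - by move=> x x' q; rewrite /bb ractDl qpiD.
  - move=> x q q'; elim/qT_ind: q => a; elim/qT_ind: q' => a'.
    by rewrite -qpiD !bb_qpi ractDr qpiD.
  - move=> x c q; elim/qT_ind: q => a.
    by rewrite lactE !bb_qpi ractA.
move=> G h hbal.
have bal3 : forall x c q, h (ract x c) q = h x (lact c q) := proj2 (proj2 hbal).
have key : forall (y : Y) f u, rmul f u = f -> ract y f = y ->
    h y (qpi Ig f) = h y (qpi Ig u).
  by move=> y f u hf hyf; rewrite -{1}hf -lactE -bal3 hyf.
have hind : forall (y : Y) e e', ract y e = y -> ract y e' = y ->
    h y (qpi Ig e) = h y (qpi Ig e').
  move=> y e e' he he'.
  have [u hu] := lu_seq hA [:: e; e'].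
  have hu1 : rmul e u = e by apply: (proj1 (hu e _)); rewrite inE eqxx.
  have hu2 : rmul e' u = e' by apply: (proj1 (hu e' _)); rewrite !inE eqxx orbT.
  by rewrite (key _ _ u) // (key _ e' u).
pose unitY (y : Y) := epsilon (inhabits 0) (fun e => ract y e = y).
have unitP : forall y, ract y (unitY y) = y.
  move=> y; apply: (epsilon_spec (inhabits 0) (fun e => ract y e = y)).
  have [u [hu _]] := runit hA hY [:: y] [::].
  by exists u; apply: hu; rewrite inE eqxx.
pose K y := h y (qpi Ig (unitY y)).
have KE : forall y e, ract y e = y -> K y = h y (qpi Ig e).
  by move=> y e he; apply: hind.
have Kadd : additive_map K.
  move=> y y'; have [u [hu _]] := runit hA hY [:: y; y'] [::].
  have hy : ract y u = y by apply: hu; rewrite inE eqxx.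
  have hy' : ract y' u = y' by apply: hu; rewrite !inE eqxx orbT.
  rewrite (KE _ u); last by rewrite ractDl hy hy'.
  by rewrite (KE _ u hy) (KE _ u hy') (proj1 hbal).
have KW : forall w, W w -> K w = 0.
  move=> w [s [hs ->]].
  have [u hu] := lu_seq hA (map snd s).
  have hsu : forall p, p \in s -> rmul p.2 u = p.2.
    by move=> p hp; apply: (proj1 (hu _ _)); apply/mapP; exists p.
  rewrite (KE _ u).
    rewrite (addm_sum _ _ (bal_addl _ hbal)); apply: big1_seq => p /andP [_ hp].
    rewrite bal3 lactE hsu //.
    have -> : qpi Ig p.2 = 0 by apply/qpi_eq0; exact: hs.
    exact: (addm0 (bal_addr p.1 hbal)).
  rewrite (addm_sum _ _ (ract_addl u)); apply: eq_big_seq => p hp.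
  by rewrite -ractA hsu.
have Kq : forall v, K (val (qpi W v)) = K v.
  move=> v; apply/eqP; rewrite -subr_eq0 -(addmB _ _ Kadd); apply/eqP; apply: KW.
  exact: val_qpi.
split.
  exists (fun t => K (val t)); split.
    move=> t t' /=; move: (Kq (val t + val t')) => /= ->; exact: Kadd.
  move=> y q; rewrite /bb Kq.
  have [u [_ hu2]] := runit hA hY [::] [:: val q].
  have hq : rmul (val q) u = val q by apply: (proj1 (hu2 _ _)); rewrite inE eqxx.
  rewrite (KE _ u); last by rewrite -ractA hq.
  by rewrite bal3 lactE hq qpi_val.
move=> phi psi _ _ hphi hpsi t.
have [u [hu _]] := runit hA hY [:: val t] [::].
have ht : t = bb hI (val t) (qpi Ig u).
  by rewrite bb_qpi hu ?inE ?eqxx // qpi_val.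
by rewrite ht hphi hpsi.
Qed.

Lemma AmodI_unital (A : rng) (hA : has_local_units A) (I : A -> Prop) (hI : left_ideal I) :
  lunital (AmodI hI).
Proof.
move=> q; elim/qT_ind: q => x.
have [u hu] := lu_seq hA [:: x].
exists [:: (u, qpi (ideal_grp hI) x)]; rewrite big_seq1 /= lactI_qpi.
by rewrite (proj2 (hu x _)) // inE eqxx.
Qed.

Lemma AmodI_simple (A : rng) (I : A -> Prop) (hI : left_ideal I) :
  (exists a, ~ I a) ->
  (forall J : A -> Prop, left_ideal J -> (forall x, I x -> J x) ->
    (forall x, J x <-> I x) \/ (forall x, J x)) ->
  lsimple (AmodI hI).
Proof.
move=> [a ha] hm; split.
  exists (qpi (ideal_grp hI) a); apply/eqP => /qpi_eq0; exact: ha.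
move=> P [P0 [PB PM]].
pose J x := P (qpi (ideal_grp hI) x).
have hJ : left_ideal J.
  split; first exact: P0.
  split.
  - by move=> x y hx hy; rewrite /J (addmB _ _ (qpi_add _)); apply: PB.
  - by move=> c x hx; rewrite /J -lactI_qpi; exact: (PM c _ hx).
have hIJ : forall x, I x -> J x.
  by move=> x hx; rewrite /J (proj2 (qpi_eq0 (ideal_grp hI) x) hx).
case: (hm J hJ hIJ) => [hJI|hJall]; [left|right] => q; elim/qT_ind: q => x.
- by move=> hx; apply/qpi_eq0; apply/hJI.
- exact: hJall.
Qed.

Lemma cond_of_sf (A : rng) (hA : has_local_units A) : left_SF A ->
  forall I : A -> Prop, maximal_left_ideal I ->
     forall a : A, I a -> exists b : A, I b /\ rmul a b = a.
Proof.
move=> hSF I [hI [hna hm]] a ha.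
pose Ig := ideal_grp hI.
have hflat := hSF _ (@AmodI_unital _ hA _ hI) (@AmodI_simple _ _ hI hna hm).
have J0 : rmul a 0 = 0 by exact: (addm0 (rmul_addr a)).
have JB : forall x y, rmul a x = 0 -> rmul a y = 0 -> rmul a (x - y) = 0.
  by move=> x y hx hy; rewrite (addmB _ _ (rmul_addr a)) hx hy subrr.
pose Jg := SubGrp (spred := fun x => rmul a x = 0) J0 JB.
have hJ : forall x c, Jg x -> Jg (rmul x c).
  by move=> x c /= hx; rewrite rmulA hx (addm0 (rmul_addl c)).
pose Y := AmodJ hJ.
pose Z := AA A.
have hYu : runital Y.
  move=> q; elim/qT_ind: q => x.
  have [u hu] := lu_seq hA [:: x].
  exists [:: (qpi Jg x, u)]; rewrite big_seq1 /= ractJ_qpi.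
  by rewrite (proj1 (hu x _)) // inE eqxx.
have hZu : runital Z.
  move=> x; have [u hu] := lu_seq hA [:: x].
  exists [:: (x, u)]; rewrite big_seq1 /=.
  by rewrite (proj1 (hu x _)) // inE eqxx.
pose g (q : Y) : Z := rmul a (val q).
have gq : forall x, g (qpi Jg x) = rmul a x.
  move=> x; apply/eqP; rewrite -subr_eq0 -(addmB _ _ (rmul_addr a)); apply/eqP.
  exact: (val_qpi Jg x).
have hg : rmod_hom g.
  split.
  - move=> q q'; elim/qT_ind: q => x; elim/qT_ind: q' => x'.
    by rewrite -qpiD !gq rmulDr.
  - move=> q c; elim/qT_ind: q => x.
    by rewrite /= ractJ_qpi !gq /= rmulA.
pose f (q : Y) : Y := 0.
have hf : rmod_hom f.
  split; first by move=> x y; rewrite /f addr0.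
  by move=> x c; rewrite /f (addm0 (ract_addl c)).
have hex : exact_at f g.
  move=> q; split.
  - elim/qT_ind: q => x; rewrite gq => hx; exists 0; rewrite /f.
    by apply/esym/qpi_eq0.
  - by move=> [x <-]; rewrite /f -(qpi0 Jg) gq.
have tY := tensor_model hA hI hYu.
have tZ := tensor_model hA hI hZu.
have hbal : balanced (fun (y : Y) (q : AmodI hI) => bb hI (g y) q).
  split; [|split].
  - by move=> x x' q /=; rewrite (proj1 hg) (proj1 tZ.1).
  - by move=> x q q' /=; rewrite (proj1 (proj2 tZ.1)).
  - by move=> x c q /=; rewrite (proj2 hg) (proj2 (proj2 tZ.1)).
have [G [Gadd Gc]] := (tY.2 _ _ hbal).1.
have hFc : forall (x : Y) (q : AmodI hI), (0 : qT (XIg Y I)) = bb hI (f x) q.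
  by move=> x q; rewrite /f (addm0 (bal_addl q tY.1)).
have ex := hflat Y Y Z f g hYu hYu hZu hf hg hex _ _ _ _ _ _ tY tY tZ
  (fun _ => 0) G (fun _ _ => esym (addr0 0)) Gadd hFc Gc.
have [e he] := lu_seq hA [:: a].
have [hae hea] : rmul a e = a /\ rmul e a = a by apply: he; rewrite inE eqxx.
pose t := bb hI (Y := Y) (qpi Jg e) (qpi Ig e).
have hGt : G t = 0.
  rewrite /t Gc gq hae bb_qpi /=; apply/qpi_eq0.
  rewrite hae -{1}hea; exact: (XI_single (X := Z) e ha).
have [_ ht] := (ex t).1 hGt.
move: ht; rewrite /t bb_qpi => /esym /qpi_eq0 [s [hsI hs]].
exists (\sum_(p <- s) rmul (val p.1) p.2); split.
  apply: left_ideal_sum => // p hp; apply: (proj2 (proj2 hI)); exact: hsI.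
move: (congr1 g hs); rewrite (proj2 hg) gq /= hae hae => hga.
rewrite [RHS]hga (addm_sum _ _ (proj1 hg)) (addm_sum _ _ (rmul_addr a)).
by apply: eq_bigr => p _; rewrite (proj2 hg) /= rmulA.
Qed.

Theorem theorem2p6 (A : rng) (hA : has_local_units A) :
  left_SF A <->
  (forall I : A -> Prop, maximal_left_ideal I ->
     forall a : A, I a -> exists b : A, I b /\ rmul a b = a).
Proof. by split; [apply: cond_of_sf | apply: sf_of_cond]. Qed.
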